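(* Let $\mu_1,\mu_2$ be probability measures on $[0,\infty)$ with mean $1$ such that $\Lambda_{\mu_1},\Lambda_{\mu_2}$ are finite on a neighborhood of $0$, and let $P$ be a probability measure. (1) If there is $r_0>0$ with $G_{\mu_1}(r)\ge G_{\mu_2}(r)$ for all $r\in[0,r_0]$ and $G_{\mu_1}(r)\le G_{\mu_2}(r)$ for all $r>r_0$, then $\mathcal{U}^{\mu_1}(P)\subset\mathcal{U}^{\mu_2}(P)$. (2) Let $I_2=\{\lambda>0:\int_0^\infty G_{\mu_2}(z)z^\lambda dz<\infty\}$. If $\lim_{R\to\infty}R^\lambda\int_R^\infty G_{\mu_2}(z)\,dz=0$ for all $\lambda\in I_2$, and $\int_0^rG_{\mu_2}(z)\,dz\le\int_0^rG_{\mu_1}(z)\,dz$ for all $r\ge0$, then $\mathcal{U}^{\mu_1}(P)\subset\mathcal{U}^{\mu_2}(P)$.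
   Context: For a probability measure $\mu$ on $[0,\infty)$ with mean $1$, $G_\mu(r)=\mu([r,\infty))$ for $r\ge0$ and $\Lambda_\mu(\lambda)=\log\big((\lambda+1)\int_0^\infty G_\mu(z)z^\lambda\,dz\big)$ for $\lambda\ge0$. With $\Lambda_Q^f(\lambda)=\log E_Q[e^{\lambda f}]$, and $\Lambda_\mu$ finite near $0$, $\mathcal{U}^\mu(P)=\{Q \text{ probability measure}: Q\ll P,\ \Lambda_Q^{\log(dQ/dP)}(\lambda)\le\Lambda_\mu(\lambda)\ \text{for all }\lambda>0\}$. *)

(* Defs.v *)
From HB Require Import structures.
From mathcomp Require Import all_boot all_order all_algebra.
From mathcomp Require Import all_classical all_reals all_analysis.
Set Implicit Arguments. Unset Strict Implicit. Unset Printing Implicit Defensive.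
Import Order.TTheory GRing.Theory Num.Theory.
Import numFieldNormedType.Exports.
Local Open Scope classical_set_scope.
Local Open Scope ring_scope.
Local Open Scope ereal_scope.

Section defs.
Context (R : realType).

Definition Gmu (mu : probability R R) (r : R) : \bar R := mu `[r, +oo[%classic.

Definition Lambda_mu (mu : probability R R) (l : R) : \bar R :=
  lne ((l + 1)%:E *
       \int[lebesgue_measure]_(z in `[0%R, +oo[%classic) (Gmu mu z * (z `^ l)%:E)).

Definition admissible (mu : probability R R) : Prop :=
  [/\ mu `[0%R, +oo[%classic = 1,
      \int[mu]_x x%:E = 1 &
      exists e : R, (0 < e)%R /\
        forall l : R, (0 <= l)%R -> (l < e)%R -> Lambda_mu mu l \is a fin_num].

Context d (T : measurableType d).

Definition Lambda_Q (Q : probability T R) (f : T -> \bar R) (l : R) : \bar R :=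
  lne (\int[Q]_x expeR (l%:E * f x)).

Definition Umu (mu : probability R R) (P : probability T R) : set (probability T R) :=
  [set Q : probability T R | (Q : set T -> \bar R) `<< P /\
     forall l : R, (0 < l)%R ->
       Lambda_Q Q (fun x => lne (Radon_Nikodym (charge_of_finite_measure Q) P x)) l
       <= Lambda_mu mu l].

End defs.

(* Main.v *)
Require Import Defs.
From HB Require Import structures.
From mathcomp Require Import all_boot all_order all_algebra.
From mathcomp Require Import all_classical all_reals all_analysis.
From mathcomp Require Import lra.
Import Order.TTheory GRing.Theory Num.Theory.
Import numFieldNormedType.Exports.
Import mathcomp.analysis.measurable_realfun.
Local Open Scope classical_set_scope.
Local Open Scope ring_scope.
Local Open Scope ereal_scope.

Section S.
Context (R : realType).
Local Notation leb := (@lebesgue_measure R).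
Variable l : R.
Hypothesis hl : (0 < l)%R.

Lemma powR_lt_iff (t z : R) : (0 <= t)%R -> (0 <= z)%R ->
  (t < z `^ l)%R = (t `^ l^-1 < z)%R.
Proof.
move=> t0 z0; apply/idP/idP => H.
  rewrite ltNge; apply/negP => zs.
  have : (z `^ l <= (t `^ l^-1) `^ l)%R.
    apply: ge0_ler_powR => //; rewrite ?nnegrE ?powR_ge0 // ; exact: ltW.
  rewrite -powRrM mulVf ?gt_eqF // powRr1 // => /(lt_le_trans H); by rewrite ltxx.
have K := @gt0_ltr_powR _ _ hl (t `^ l^-1)%R z.
have e : ((t `^ l^-1) `^ l = t)%R by rewrite -powRrM mulVf ?gt_eqF // powRr1.
rewrite -{1}e; apply: K => //; rewrite nnegrE ?powR_ge0 //.
Qed.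

Definition Sl : set (R * R) := [set p | (0 <= p.1)%R /\ (0 <= p.2)%R /\ (p.1 < p.2 `^ l)%R].

Lemma mSl : measurable Sl.
Proof.
pose f1 (p : R * R) := (0 <= p.1)%R.
pose f2 (p : R * R) := (0 <= p.2)%R.
pose f3 (p : R * R) := (p.1 < p.2 `^ l)%R.
rewrite (_ : Sl = f1 @^-1` [set true] `&` (f2 @^-1` [set true] `&` f3 @^-1` [set true])); last first.
  by apply/seteqP; split => p /=.
have m1 : measurable_fun setT f1 by apply: measurable_realfun.measurable_fun_ler => //; exact: measurable_fst.
have m2 : measurable_fun setT f2 by apply: measurable_realfun.measurable_fun_ler => //; exact: measurable_snd.
have m3 : measurable_fun setT f3.
  apply: measurable_realfun.measurable_fun_ltr; first exact: measurable_fst.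
  apply: (@measurableT_comp _ _ _ _ _ _ (fun x : R => x `^ l)%R); [exact: measurable_realfun.measurable_powR | exact: measurable_snd].
apply: measurableI; last apply: measurableI.
- by have := m1 measurableT [set true]; rewrite setTI; exact.
- by have := m2 measurableT [set true]; rewrite setTI; exact.
- by have := m3 measurableT [set true]; rewrite setTI; exact.
Qed.

Lemma layer (f : R -> R) (f0 : forall x, (0 <= f x)%R) (mf : measurable_fun setT f) :
  \int[leb]_(z in `[0%R, +oo[) ((f z)%:E * (z `^ l)%:E)
  = \int[leb]_(t in `[0%R, +oo[) \int[leb]_(z in `](t `^ l^-1)%R, +oo[%classic) (f z)%:E.
Proof.
pose g (p : R * R) := ((f p.2) * \1_Sl p)%:E.
have g0 p : 0 <= g p by rewrite lee_fin mulr_ge0.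
have FT : \int[leb]_x \int[leb]_y g (x, y) = \int[leb]_y \int[leb]_x g (x, y).
  apply: fubini_tonelli => //.
  apply/measurable_EFinP; apply: measurable_funM.
    exact: (measurableT_comp mf measurable_snd).
  exact: measurable_indic mSl.
rewrite integral_mkcond.
transitivity (\int[leb]_y \int[leb]_x g (x, y)).
  apply: eq_integral => z _; rewrite patchE.
  have [z0|z0] := leP 0%R z.
    rewrite mem_set /=; last by rewrite in_itv /= z0.
    rewrite (_ : (fun t => g (t, z)) = fun t => (f z)%:E * (\1_(`[0%R, (z `^ l)%R[%classic) t)%:E); last first.
      apply/funext => t; rewrite /g EFinM /indic; congr (_ * _%:E); congr (_%:R).
      congr (nat_of_bool _); apply/idP/idP; rewrite !inE /= in_itv /=.
        by rewrite /Sl /= => -[a [_ b]]; apply/andP; split.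
      move/andP => [a b]; exact: (conj a (conj z0 b)).

    have -> := (@ge0_integralZl_EFin _ _ _ leb setT measurableT (fun t => (\1_(`[0%R, (z `^ l)%R[%classic) t)%:E)) _ _ (f z) (f0 z); first last.
    - by apply/measurable_EFinP; apply: measurable_indic; exact: measurable_itv.
    - by move=> x _; rewrite lee_fin.
    rewrite (integral_indic _ measurableT); last exact: measurable_itv.
    rewrite setIT; congr (_ * _); apply/esym; apply: (eq_trans (lebesgue_measure_itv _)).
    rewrite /= lte_fin.
    case: ifPn => [_|]; first by rewrite oppr0 adde0.
    rewrite -leNgt => h; suff -> : (z `^ l = 0)%R by [].
    by apply/eqP; rewrite eq_le h powR_ge0.
  rewrite memNset /=; last by rewrite in_itv /= leNgt z0.
  apply/esym/integral0_eq => t _; rewrite /g /indic memNset.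
    by rewrite mulr0.
  by move=> [_ [h _]]; move: z0; rewrite ltNge h.
rewrite -FT [RHS]integral_mkcond; congr (integral _ _ _); apply/funext => t; rewrite patchE.
have [t0|t0] := leP 0%R t.
  rewrite mem_set /=; last by rewrite in_itv /= t0.
  rewrite [RHS]integral_mkcond; congr (integral _ _ _); apply/funext => z; rewrite patchE /g /indic.
  case: ifPn => [/set_mem|/negP h'].
    rewrite /= in_itv /= andbT => h.
    have z0 : (0 <= z)%R by apply: le_trans (ltW h); rewrite powR_ge0.
    rewrite mem_set; first by rewrite mulr1.
    split; first exact: t0.
    split; first exact: z0.
    by rewrite powR_lt_iff.
  rewrite memNset; first by rewrite mulr0.
  move=> -[_ [z0]]; rewrite powR_lt_iff.
  - by move=> h; apply: h'; apply: mem_set; rewrite /= in_itv /= andbT.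
  - exact: t0.
  - exact: z0.
rewrite memNset /=; last by rewrite in_itv /= leNgt t0.
apply/integral0_eq => z _; rewrite /g /indic memNset.
  by rewrite mulr0.
by move=> [h _]; move: t0; rewrite ltNge h.
Qed.

Definition gf (f : R -> R) (p : R * R) := ((f p.2) * \1_Sl p)%:E.

Lemma innerF (f : R -> R) (t : R) : (0 <= t)%R ->
  \int[leb]_z gf f (t, z) = \int[leb]_(z in `](t `^ l^-1)%R, +oo[%classic) (f z)%:E.
Proof.
move=> t0.
rewrite [RHS]integral_mkcond; congr (integral _ _ _); apply/funext => z; rewrite patchE /gf /indic.
case: ifPn => [/set_mem|/negP h'].
  rewrite /= in_itv /= andbT => h.
  have z0 : (0 <= z)%R by apply: le_trans (ltW h); rewrite powR_ge0.
  rewrite mem_set; first by rewrite mulr1.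
  split; first exact: t0.
  split; first exact: z0.
  by rewrite powR_lt_iff.
rewrite memNset; first by rewrite mulr0.
move=> -[_ [z0]]; rewrite powR_lt_iff.
- by move=> h; apply: h'; apply: mem_set; rewrite /= in_itv /= andbT.
- exact: t0.
- exact: z0.
Qed.

Lemma innerF0 (f : R -> R) (t : R) : (t < 0)%R -> \int[leb]_z gf f (t, z) = 0.
Proof.
move=> t0; apply/integral0_eq => z _; rewrite /gf /indic memNset.
  by rewrite mulr0.
by move=> [h _]; move: t0; rewrite ltNge h.
Qed.

Lemma layer_le (f1 f2 : R -> R) (f10 : forall x, (0 <= f1 x)%R) (f20 : forall x, (0 <= f2 x)%R)
  (mf1 : measurable_fun setT f1) (mf2 : measurable_fun setT f2) :
  (forall s, (0 <= s)%R -> \int[leb]_(z in `]s, +oo[%classic) (f1 z)%:E <= \int[leb]_(z in `]s, +oo[%classic) (f2 z)%:E) ->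
  \int[leb]_(z in `[0%R, +oo[) ((f1 z)%:E * (z `^ l)%:E) <= \int[leb]_(z in `[0%R, +oo[) ((f2 z)%:E * (z `^ l)%:E).
Proof.
move=> H; rewrite (@layer f1 f10 mf1) (@layer f2 f20 mf2).
apply: ge0_le_integral.
- exact: measurable_itv.
- move=> t _; apply: integral_ge0 => z _; rewrite lee_fin; exact: f10.
- apply: (eq_measurable_fun (fun t => \int[leb]_z gf f1 (t, z))).
    by move=> t; rewrite inE /= in_itv /= andbT => t0; rewrite innerF.
  apply: measurable_funTS.
  apply: (@measurable_fun_fubini_tonelli_F _ _ _ _ _ leb (gf f1)).
    apply/measurable_EFinP; apply: measurable_funM.
      exact: (measurableT_comp mf1 measurable_snd).
    exact: measurable_indic mSl.
  by move=> p; rewrite lee_fin mulr_ge0.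
- apply: (eq_measurable_fun (fun t => \int[leb]_z gf f2 (t, z))).
    by move=> t; rewrite inE /= in_itv /= andbT => t0; rewrite innerF.
  apply: measurable_funTS.
  apply: (@measurable_fun_fubini_tonelli_F _ _ _ _ _ leb (gf f2)).
    apply/measurable_EFinP; apply: measurable_funM.
      exact: (measurableT_comp mf2 measurable_snd).
    exact: measurable_indic mSl.
  by move=> p; rewrite lee_fin mulr_ge0.
- move=> t; rewrite /= in_itv /= andbT => t0; apply: H; exact: powR_ge0.
Qed.
End S.

Section M.
Context (R : realType).
Local Notation leb := (@lebesgue_measure R).

Definition SE : set (R * R) := [set p | (0 <= p.1)%R /\ (p.1 <= p.2)%R].

Lemma mSE : measurable SE.
Proof.
pose f1 (p : R * R) := (0 <= p.1)%R.
pose f3 (p : R * R) := (p.1 <= p.2)%R.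
rewrite (_ : SE = f1 @^-1` [set true] `&` f3 @^-1` [set true]); last first.
  by apply/seteqP; split => p /=.
have m1 : measurable_fun setT f1 by apply: measurable_realfun.measurable_fun_ler => //; exact: measurable_fst.
have m3 : measurable_fun setT f3.
  by apply: measurable_realfun.measurable_fun_ler; [exact: measurable_fst|exact: measurable_snd].
apply: measurableI.
- by have := m1 measurableT [set true]; rewrite setTI; exact.
- by have := m3 measurableT [set true]; rewrite setTI; exact.
Qed.

Lemma mean_G (mu : probability R R) : mu `[0%R, +oo[%classic = 1 ->
  \int[mu]_x x%:E = \int[leb]_(s in `[0%R, +oo[) Gmu mu s.
Proof.
move=> h1.
pose h (p : R * R) : \bar R := (\1_SE p)%:E.
have FT : \int[leb]_x \int[mu]_y h (x, y) = \int[mu]_y \int[leb]_x h (x, y).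
  apply: fubini_tonelli.
    apply/measurable_EFinP; exact: measurable_indic mSE.
  by move=> p; rewrite lee_fin.
transitivity (\int[mu]_x ((((fun x : R => x) \max (cst 0%R)) x)%:E)).
  apply: ae_eq_integral.
  - exact: measurableT.
  - apply/measurable_EFinP; exact: measurable_id.
  - apply/measurable_EFinP; apply: measurable_maxr; [exact: measurable_id| exact: measurable_cst].
  - exists `]-oo, 0%R[%classic; split; first exact: measurable_itv.
      have := @probability_setC _ _ _ mu `[0%R, +oo[%classic (measurable_itv _).
      rewrite h1 subee // setCitvr; exact.
    move=> x /= hx; rewrite /= in_itv /=; rewrite ltNge; apply/negP => x0.
    by apply: hx => _; rewrite max_l.
transitivity (\int[mu]_y \int[leb]_x h (x, y)).
  apply: eq_integral => y _.
  rewrite (_ : (fun x => h (x, y)) = fun x => (\1_(`[0%R, y]%classic) x)%:E); last first.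
    apply/funext => x; rewrite /h /indic; congr (_%:R%:E); congr (nat_of_bool _).
    apply/idP/idP; rewrite !inE /= in_itv /=.
      by rewrite /SE /= => -[a b]; apply/andP; split.
    by move/andP => [a b]; exact: (conj a b).
  rewrite (integral_indic _ measurableT); last exact: measurable_itv.
  rewrite setIT; apply/esym; apply: (eq_trans (lebesgue_measure_itv _)).
  rewrite /= lte_fin; case: ltP => y0.
    rewrite oppr0 adde0; congr (_%:E); apply/esym/max_idPl; exact: ltW.
  congr (_%:E); apply/esym/max_idPr; exact: y0.
rewrite -FT [RHS]integral_mkcond; congr (integral _ _ _); apply/funext => s; rewrite patchE.
have [s0|s0] := leP 0%R s.
  rewrite mem_set /=; last by rewrite in_itv /= s0.
  rewrite (_ : (fun y => h (s, y)) = fun y => (\1_(`[s, +oo[%classic) y)%:E); last first.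
    apply/funext => y; rewrite /h /indic; congr (_%:R%:E); congr (nat_of_bool _).
    apply/idP/idP; rewrite !inE /= in_itv /=.
      by rewrite /SE /= => -[a b]; rewrite andbT.
    by rewrite andbT => b; exact: (conj s0 b).
  rewrite (integral_indic _ measurableT); last exact: measurable_itv.
  by rewrite setIT.
rewrite memNset /=; last by rewrite in_itv /= leNgt s0.
apply/integral0_eq => y _; rewrite /h /indic memNset.
  by [].
by move=> [h0 _]; move: s0; rewrite ltNge h0.
Qed.
End M.

Section G.
Context (R : realType).
Local Notation leb := (@lebesgue_measure R).

Definition Gr (mu : probability R R) (s : R) : R := fine (Gmu mu s).

Lemma GrE mu s : (Gr mu s)%:E = Gmu mu s.
Proof. by rewrite /Gr fineK // fin_num_measure. Qed.

Lemma Gr0 mu s : (0 <= Gr mu s)%R.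
Proof. by rewrite /Gr fine_ge0 // measure_ge0. Qed.

Lemma mGr mu : measurable_fun setT (Gr mu).
Proof.
apply: measurable_realfun.nonincreasing_measurable => // r s rs.
rewrite /Gr fine_le ?fin_num_measure // /Gmu le_measure ?inE //.
by apply: subitvPl; rewrite bnd_simp.
Qed.

Lemma ereal_aux (a1 b1 a2 b2 : \bar R) : 0 <= a1 -> 0 <= b1 -> 0 <= a2 -> 0 <= b2 ->
  a1 + b1 = 1 -> a2 + b2 = 1 -> a2 <= a1 -> b1 <= b2.
Proof.
move: a1 b1 a2 b2 => [a1| |] [b1| |] [a2| |] [b2| |] //=.
rewrite !lee_fin => _ _ _ _ [e1] [e2] h; lra.
Qed.

Lemma totG mu : admissible mu -> \int[leb]_(s in `[0%R, +oo[) (Gr mu s)%:E = 1.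
Proof.
case=> h1 hm _; rewrite -hm (@mean_G R mu h1) ; apply: eq_integral => s _; exact: GrE.
Qed.

Lemma splitG mu s : admissible mu -> (0 <= s)%R ->
  \int[leb]_(z in `[0%R, s]) (Gr mu z)%:E + \int[leb]_(z in `]s, +oo[%classic) (Gr mu z)%:E = 1.
Proof.
move=> a s0; rewrite -(@totG mu a) -ge0_integral_setU.
- congr (integral _ _ _); apply/seteqP; split => x /=; rewrite !in_itv /=.
  + case=> [/andP[x0 xs]|]; first by rewrite x0.
    rewrite andbT => h; rewrite andbT; exact: le_trans s0 (ltW h).
  + rewrite andbT => x0; have [xs|xs] := leP x s.
      by left; rewrite x0.
    by right.
- exact: measurable_itv.
- exact: measurable_itv.
- apply/measurable_EFinP; apply: measurable_funTS; exact: mGr.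
- by move=> x _; rewrite lee_fin; exact: Gr0.
- apply/disj_setPS => x [] /=; rewrite !in_itv /= => /andP[_ xs]; rewrite andbT => sx.
  by move: xs; rewrite leNgt sx.
Qed.

Lemma tailG mu1 mu2 s : admissible mu1 -> admissible mu2 -> (0 <= s)%R ->
  \int[lebesgue_measure]_(z in `[0%R, s]) Gmu mu2 z
      <= \int[lebesgue_measure]_(z in `[0%R, s]) Gmu mu1 z ->
  \int[leb]_(z in `]s, +oo[%classic) (Gr mu1 z)%:E <= \int[leb]_(z in `]s, +oo[%classic) (Gr mu2 z)%:E.
Proof.
move=> a1 a2 s0 H.
apply: (ereal_aux _ _ _ _ _ _ _ _ (@splitG mu1 s a1 s0) (@splitG mu2 s a2 s0)).
- by apply: integral_ge0 => x _; rewrite lee_fin; exact: Gr0.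
- by apply: integral_ge0 => x _; rewrite lee_fin; exact: Gr0.
- by apply: integral_ge0 => x _; rewrite lee_fin; exact: Gr0.
- by apply: integral_ge0 => x _; rewrite lee_fin; exact: Gr0.
- have E mu : \int[leb]_(z in `[0%R, s]) (Gr mu z)%:E = \int[leb]_(z in `[0%R, s]) Gmu mu z.
    by apply: eq_integral => z _; exact: GrE.
  by rewrite !E.
Qed.

Lemma intE mu s : \int[leb]_(z in `[0%R, s]) (Gr mu z)%:E = \int[leb]_(z in `[0%R, s]) Gmu mu z.
Proof. by apply: eq_integral => z _; exact: GrE. Qed.

Lemma intcomp (mu1 mu2 : probability R R) (l : R) : (0 < l)%R ->
  (forall s, (0 <= s)%R -> \int[leb]_(z in `]s, +oo[%classic) (Gr mu1 z)%:E <= \int[leb]_(z in `]s, +oo[%classic) (Gr mu2 z)%:E) ->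
  \int[lebesgue_measure]_(z in `[0%R, +oo[) (Gmu mu1 z * (z `^ l)%:E)
  <= \int[lebesgue_measure]_(z in `[0%R, +oo[) (Gmu mu2 z * (z `^ l)%:E).
Proof.
move=> l0 H.
have E mu : \int[leb]_(z in `[0%R, +oo[) (Gmu mu z * (z `^ l)%:E) = \int[leb]_(z in `[0%R, +oo[) ((Gr mu z)%:E * (z `^ l)%:E).
  by apply: eq_integral => z _; rewrite GrE.
rewrite !E; apply: (@layer_le R l l0 (Gr mu1) (Gr mu2) (@Gr0 mu1) (@Gr0 mu2) (mGr mu1) (mGr mu2)).
exact: H.
Qed.

End G.

Lemma incl (R : realType) (d : measure_display) (T : measurableType d)
  (mu1 mu2 : probability R R) (P : probability T R) :
  (forall l : R, (0 < l)%R ->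
    \int[lebesgue_measure]_(z in `[0%R, +oo[) (Gmu mu1 z * (z `^ l)%:E)
    <= \int[lebesgue_measure]_(z in `[0%R, +oo[) (Gmu mu2 z * (z `^ l)%:E)) ->
  Umu mu1 P `<=` Umu mu2 P.
Proof.
move=> H Q [ac HQ]; split; first exact: ac.
move=> l l0; apply: le_trans (HQ l l0) _; rewrite /Lambda_mu.
have ge0 mu : 0 <= \int[lebesgue_measure]_(z in `[0%R, +oo[) (Gmu mu z * (z `^ l)%:E).
  by apply: integral_ge0 => z _; rewrite mule_ge0 // lee_fin powR_ge0.
have l1 : 0 <= (l + 1)%:E by rewrite lee_fin; lra.
rewrite lee_lne.
- by apply: lee_wpmul2l => //; exact: H.
- by rewrite in_itv /= leey andbT mule_ge0.
- by rewrite in_itv /= leey andbT mule_ge0.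
Qed.

Theorem mainTheorem7 (R : realType) (d : measure_display) (T : measurableType d)
  (mu1 mu2 : probability R R) (P : probability T R) :
  admissible mu1 -> admissible mu2 ->
  ((exists r0 : R, (0 < r0)%R /\
      (forall r : R, (0 <= r)%R -> (r <= r0)%R -> Gmu mu2 r <= Gmu mu1 r) /\
      (forall r : R, (r0 < r)%R -> Gmu mu1 r <= Gmu mu2 r)) ->
   Umu mu1 P `<=` Umu mu2 P)
  /\
  ((forall l : R, (0 < l)%R ->
      \int[lebesgue_measure]_(z in `[0%R, +oo[) (Gmu mu2 z * (z `^ l)%:E) < +oo ->
      ((R0 `^ l)%:E * \int[lebesgue_measure]_(z in `[R0, +oo[) Gmu mu2 z)
        @[R0 --> +oo%R] --> (0 : \bar R)) ->
   (forall r : R, (0 <= r)%R ->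
      \int[lebesgue_measure]_(z in `[0%R, r]) Gmu mu2 z
      <= \int[lebesgue_measure]_(z in `[0%R, r]) Gmu mu1 z) ->
   Umu mu1 P `<=` Umu mu2 P).
Proof.
move=> a1 a2; split.
  case=> r0 [r00 [Hle Hge]]; apply: incl => l l0; apply: (@intcomp R mu1 mu2 l l0) => s s0.
  have [sr|sr] := leP s r0.
    apply: (@tailG R mu1 mu2 s a1 a2 s0); rewrite -!intE; apply: ge0_le_integral.
    - exact: measurable_itv.
    - by move=> z _; rewrite lee_fin; exact: Gr0.
    - apply/measurable_EFinP; apply: measurable_funTS; exact: mGr.
    - apply/measurable_EFinP; apply: measurable_funTS; exact: mGr.
    - move=> z; rewrite /= in_itv /= => /andP[z0 zs]; rewrite !GrE; apply: Hle.
      + exact: z0.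
      + exact: le_trans zs sr.
  apply: ge0_le_integral.
  - exact: measurable_itv.
  - by move=> z _; rewrite lee_fin; exact: Gr0.
  - apply/measurable_EFinP; apply: measurable_funTS; exact: mGr.
  - apply/measurable_EFinP; apply: measurable_funTS; exact: mGr.
  - move=> z; rewrite /= in_itv /= andbT => sz; rewrite !GrE; apply: Hge.
    exact: lt_trans sr sz.
move=> _ Hint; apply: incl => l l0; apply: (@intcomp R mu1 mu2 l l0) => s s0.
apply: (@tailG R mu1 mu2 s a1 a2 s0); exact: Hint.
Qed.
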